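(* Let $e,h\in\omega^\omega$ be nondecreasing and unbounded, and suppose $e(l)\le\min\{n\in\omega: l<h(2^n)\}$ for all $l\in\omega$. Then $\mathcal{N}^{e^*}\subseteq\mathcal{J}_h$.
   Context: $2^\omega$ carries the metric $d(x,y)=2^{-\min\{n:x(n)\neq y(n)\}}$ for $x\neq y$ and $d(x,x)=0$. A gauge function is a nondecreasing $f\colon[0,\infty)\to[0,\infty)$ with $f(0)=0$, $\lim_{x\to0}f(x)=0$; $\mathcal{H}^f(A)=\lim_{\delta\to0}\inf\{\sum_nf(\operatorname{diam}C_n):A\subseteq\bigcup_nC_n,\ \operatorname{diam}C_n\le\delta\}$ and $\mathcal{N}^f=\{A\subseteq2^\omega:\mathcal{H}^f(A)=0\}$. For nondecreasing unbounded $e\in\omega^\omega$, $e^*$ is the gauge function with $e^*(0)=0$, $e^*(2^{-k})=2^{-e(k)}$ for all $k\in\omega$, linear on each interval $[2^{-k-1},2^{-k}]$ (and constant on $[1,\infty)$). For $\sigma\in(2^{<\omega})^\omega$, $(\operatorname{ht}\sigma)(n)=|\sigma(n)|$ and $[\sigma]_\infty=\{x\in2^\omega:\exists^\infty n\ \sigma(n)\subseteq x\}$; for $g\in\omega^\omega$, $\mathcal{J}_g=\{A\subseteq2^\omega:\exists\sigma\in(2^{<\omega})^\omega\,(\operatorname{ht}\sigma=g\wedge A\subseteq[\sigma]_\infty)\}$. *)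

(* Defs.v *)
From HB Require Import structures.
From mathcomp Require Import all_boot all_order all_algebra.
From mathcomp Require Import all_classical all_reals all_analysis.
Set Implicit Arguments. Unset Strict Implicit. Unset Printing Implicit Defensive.
Import Order.TTheory GRing.Theory Num.Theory.
Local Open Scope classical_set_scope.
Local Open Scope ring_scope.

Definition cantor := nat -> bool.

Section Defs.
Variable R : realType.

Definition cdist (x y : cantor) : R :=
  match pselect (exists n, x n != y n) with
  | left H => (2 ^- (ex_minn H))%R
  | right _ => 0
  end.

Definition diam (C : set cantor) : R :=
  if pselect (C = set0) then 0 else sup [set cdist x y | x in C & y in C].

Definition hausdorff_pre (f : R -> R) (delta : R) (A : set cantor) : \bar R :=
  ereal_inf [set (\sum_(0 <= n <oo) (f (diam (C n)))%:E)%E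
            | C in [set C : nat -> set cantor |
                     A `<=` \bigcup_n C n /\ forall n, diam (C n) <= delta]].

Definition hausdorff (f : R -> R) (A : set cantor) : \bar R :=
  lim ((fun delta => hausdorff_pre f delta A) @ 0^'+).

Definition Nnull (f : R -> R) : set (set cantor) :=
  [set A | hausdorff f A = 0%E].

(* e^*: e^*(0)=0, e^*(2^-k) = 2^-(e k), linear on [2^{-k-1},2^{-k}],
   constant on [1,oo).  For 0 < x < 1, k is the least k with 2^{-k-1} < x,
   so that x ∈ (2^{-k-1}, 2^{-k}]. Values at x < 0 are irrelevant (set 0). *)
Definition estar (e : nat -> nat) (x : R) : R :=
  if x <= 0 then 0
  else if 1 <= x then 2 ^- (e 0%N)
  else match pselect (exists k : nat, (2 ^- k.+1 < x)%R) with
       | left H =>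
         let k := ex_minn H in
         2 ^- (e k.+1) +
           (x - 2 ^- k.+1) * (2 ^- (e k) - 2 ^- (e k.+1)) / (2 ^- k - 2 ^- k.+1)
       | right _ => 0
       end.
End Defs.

Definition prefix_of (s : seq bool) (x : cantor) : Prop :=
  forall i, (i < size s)%N -> nth false s i = x i.

Definition inf_often_set (sigma : nat -> seq bool) : set cantor :=
  [set x | forall m, exists n, (m <= n)%N /\ prefix_of (sigma n) x].

Definition Jset (g : nat -> nat) : set (set cantor) :=
  [set A | exists sigma : nat -> seq bool,
      (forall n, size (sigma n) = g n) /\ A `<=` inf_often_set sigma].

(* Main.v *)
Require Import Defs.
From mathcomp Require Import all_boot all_order all_algebra.
From mathcomp Require Import all_classical all_reals all_analysis.
From mathcomp Require Import zify ring lra.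
Set Implicit Arguments. Unset Strict Implicit. Unset Printing Implicit Defensive.
Import Order.TTheory GRing.Theory Num.Theory.
Local Open Scope classical_set_scope.
Local Open Scope ring_scope.

Section A.
Variable R : realType.

Lemma pre_nonincr (f : R -> R) (A : set cantor) :
  {homo (fun d => hausdorff_pre f d A) : n m / n <= m >-> (m <= n)%E}.
Proof.
move=> d1 d2 d12; rewrite /hausdorff_pre.
apply: le_ereal_inf_tmp => _ [C [HA Hd] <-].
apply: ereal_inf_lbound; exists C => //; split => // n.
exact: le_trans (Hd n) d12.
Qed.

Lemma pre_le_haus (f : R -> R) (A : set cantor) :
  (hausdorff_pre f 1 A <= hausdorff f A)%E.
Proof.
rewrite /hausdorff.
have := @nonincreasing_at_right_cvge R (fun d => hausdorff_pre f d A) 0 (BRight 1).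
move=> /(_ _ _) H.
rewrite (cvg_lim _ (H _ _)) //; last first.
- by move=> x y _ _; apply: pre_nonincr.
- by rewrite bnd_simp.
apply: ereal_sup_ubound; exists 1 => //=.
by rewrite in_itv /= ltr01 lexx.
Qed.
End A.


Section A.
Variable R : realType.

Lemma small_cover (f : R -> R) (A : set cantor) (eps : R) :
  (forall x, 0 <= f x) -> Nnull f A -> 0 < eps ->
  exists C : nat -> set cantor, A `<=` \bigcup_n C n /\
    forall N, \sum_(0 <= j < N) f (diam R (C j)) <= eps.
Proof.
move=> f0 HA e0.
have : (hausdorff_pre f 1 A < eps%:E)%E.
  by apply: le_lt_trans (pre_le_haus f A) _; rewrite HA lte_fin.
move=> /ereal_inf_lt [_ [C [HC _] <-]] Hlt.
exists C; split => // N.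
rewrite -lee_fin -sumEFin.
apply: le_trans (ltW Hlt).
by apply: nneseries_lim_ge => n _ _; rewrite lee_fin.
Qed.
End A.


Section A.
Variable R : realType.

Lemma p2_gt0 n : 0 < (2:R) ^- n.
Proof. by rewrite invr_gt0 exprn_gt0. Qed.

Lemma p2lt m n : ((2:R) ^- n < 2 ^- m) = (m < n)%N.
Proof.
by rewrite ltf_pV2 ?posrE ?exprn_gt0 // ltr_eXn2l // ltr1n.
Qed.

Lemma p2le m n : ((2:R) ^- n <= 2 ^- m) = (m <= n)%N.
Proof.
by rewrite lef_pV2 ?posrE ?exprn_gt0 // ler_eXn2l // ltr1n.
Qed.

Lemma cdist_cases (x y : cantor) :
  (cdist R x y = 0 /\ forall i, x i = y i) \/
  exists n, cdist R x y = 2 ^- n /\ x n <> y n /\ forall i, (i < n)%N -> x i = y i.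
Proof.
rewrite /cdist; case: pselect => [H|H].
  right; case: ex_minnP => n /eqP Hn Hmin; exists n; split => //; split => //.
  move=> i lti; apply/eqP; apply: contraTT lti => /Hmin; by rewrite -leqNgt.
left; split => // i; apply/eqP; apply: contra_notT H => Hi; by exists i.
Qed.

Lemma cdist_ge0 x y : 0 <= cdist R x y.
Proof.
by case: (cdist_cases x y) => [[->]|[n [-> _]]] //; rewrite ltW // p2_gt0.
Qed.

Lemma diam_cases (C : set cantor) (c : cantor) : C c ->
  (forall x, C x -> forall i, x i = c i) \/
  exists m, diam R C = 2 ^- m /\ forall x, C x -> forall i, (i < m)%N -> x i = c i.
Proof.
move=> Cc.
case: (pselect (exists x, C x /\ exists i, x i <> c i)) => [Hex|Hno]; last first.
  left => x Cx i; apply: contra_notP Hno => H; exists x; split => //; by exists i.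
right.
pose P m := `[< exists x y, C x /\ C y /\ cdist R x y = 2 ^- m >].
have HP : exists m, P m.
  case: Hex => x [Cx [i Hi]].
  case: (cdist_cases x c) => [[_ H]|[n [Hn _]]]; first by case: Hi.
  by exists n; apply/asboolP; exists x, c.
case: (ex_minnP HP) => m /asboolP [a [b [Ca [Cb Hab]]]] Hmin.
have ub : ubound [set cdist R x y | x in C & y in C] (2 ^- m).
  move=> _ [x Cx [y Cy <-]].
  case: (cdist_cases x y) => [[-> _]|[n [Hn _]]]; first by rewrite ltW // p2_gt0.
  rewrite Hn p2le; apply: Hmin; apply/asboolP; by exists x, y.
exists m; split.
  rewrite /diam; destruct (pselect (C = set0)) as [C0|nC0].
    by exfalso; move: Cc; rewrite C0.
  rewrite /=; apply/eqP; rewrite eq_le; apply/andP; split.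
    apply: ge_sup => //; by exists (cdist R a b), a => //; exists b.
  apply: ub_le_sup; first by exists (2 ^- m).
  by exists a => //; exists b.
move=> x Cx i lti.
case: (cdist_cases x c) => [[_ H]|[n [Hn [Hxn Hlt]]]]; first exact: H.
have mn : (m <= n)%N by apply: Hmin; apply/asboolP; exists x, c.
apply: Hlt; exact: leq_trans lti mn.
Qed.
End A.


Section A.
Variable R : realType.

Lemma estar_ge0 (e : nat -> nat) (x : R) : {homo e : m n / (m <= n)%N} ->
  0 <= estar e x.
Proof.
move=> emon; rewrite /estar.
case: ifP => // _; case: ifP => [_|_]; first by rewrite ltW // p2_gt0.
case: pselect => [H|H] //.
case: ex_minnP => k Hk _.
apply: addr_ge0; first by rewrite ltW // p2_gt0.
apply: divr_ge0; last by rewrite subr_ge0 p2le.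
apply: mulr_ge0; first by rewrite subr_ge0 ltW.
by rewrite subr_ge0 p2le emon.
Qed.

Lemma estar_p2 (e : nat -> nat) (m : nat) :
  estar e (2 ^- m : R) = 2 ^- (e m).
Proof.
rewrite /estar.
have -> : (2 ^- m <= 0 :> R) = false by apply/negbTE; rewrite -ltNge p2_gt0.
case: m => [|m].
  by rewrite expr0 invr1 lexx.
have -> : (1 <= 2 ^- m.+1 :> R) = false.
  by apply/negbTE; rewrite -ltNge -[X in _ < X]invr1 -(expr0 (2:R)) p2lt.
case: pselect => [H|H]; last first.
  by exfalso; apply: H; exists m.+1; rewrite p2lt.
case: ex_minnP => k Hk Hmin.
have km : k = m.+1.
  apply/eqP; rewrite eqn_leq; apply/andP; split.
    by apply: Hmin; rewrite p2lt.
  by move: Hk; rewrite p2lt.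
subst k.
rewrite [_ * _ / _]mulrAC mulfV ?mul1r; first by rewrite addrC subrK.
by rewrite subr_eq0 eq_sym; apply/negP => /eqP H2; move: (@p2lt R m.+1 m.+2); rewrite H2 ltxx ltnSn.
Qed.
End A.


Definition rank (L : nat -> nat) j := (\sum_(0 <= i < j) (L i == L j))%N.

Lemma rank_lt L j j' : (j < j')%N -> L j = L j' -> (rank L j < rank L j')%N.
Proof.
move=> jj' Lj; rewrite /rank -Lj.
rewrite [X in (_ < X)%N](@big_cat_nat _ _ _ j.+1) //=.
rewrite big_nat_recr //= eqxx; lia.
Qed.

Lemma odd_part_inj a b x y : (2 ^ a * (2 * x).+1 = 2 ^ b * (2 * y).+1)%N ->
  a = b /\ x = y.
Proof.
wlog ab : a b x y / (a <= b)%N.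
  move=> W H; case: (leqP a b) => [ab|ba]; first exact: W.
  by case: (W b a y x (ltnW ba) (esym H)) => -> ->.
move=> H; have [d bd] : exists d, b = (a + d)%N by exists (b - a)%N; lia.
subst b; clear ab; move: H; rewrite expnD -mulnA => /eqP; rewrite eqn_pmul2l ?expn_gt0 //.
case: d => [|d] /eqP H.
  by move: H; rewrite expn0 mul1n => H; split; lia.
exfalso; move: (congr1 odd H); rewrite expnS -mulnA oddS !oddM.
by [].
Qed.

Lemma dyadic_inj D D' r r' : (r < 2 ^ D)%N -> (r' < 2 ^ D')%N ->
  (2 ^ D + r = 2 ^ D' + r')%N -> D = D' /\ r = r'.
Proof.
wlog DD : D D' r r' / (D <= D')%N.
  move=> W H1 H2 H; case: (leqP D D') => [ab|ba]; first exact: W.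
  by case: (W D' D r' r (ltnW ba) H2 H1 (esym H)) => -> ->.
move=> H1 H2 H.
case: (ltngtP D D') => [lt|gt|eq]; last by subst; split => //; lia.
- have : (2 ^ D.+1 <= 2 ^ D')%N by rewrite leq_exp2l.
  rewrite expnS; lia.
- lia.
Qed.

Section R.
Variable R : realType.

Lemma rank_bound (L : nat -> nat) (K : nat) :
  (forall N, \sum_(0 <= j < N) (2:R) ^- (L j) <= 2 ^- K) ->
  forall j, ((rank L j).+1 * 2 ^ K <= 2 ^ (L j))%N.
Proof.
move=> HS j.
have H1 : ((rank L j).+1%:R * 2 ^- (L j) <= (2:R) ^- K).
  apply: le_trans (HS j.+1).
  rewrite /rank -addn1 natrD natr_sum mulrDl mulr_suml.
  rewrite big_nat_recr //= mul1r lerD2r.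
  apply: ler_sum => i _.
  case: eqP => [->|_]; first by rewrite mul1r.
  by rewrite mul0r ltW // invr_gt0 exprn_gt0.
rewrite -(ler_nat R) natrM !natrX.
have p2K : (0:R) < 2 ^+ K by rewrite exprn_gt0.
have p2L : (0:R) < 2 ^+ L j by rewrite exprn_gt0.
move: H1; set a := _%:R; rewrite -(ler_pM2r p2K) -(ler_pM2r p2L).
by rewrite mulrAC divfK ?gt_eqF // mulVf ?gt_eqF // mul1r.
Qed.
End R.


Section A.
Variable R : realType.

Lemma p2S n : (2:R) ^- n = 2 ^- n.+1 + 2 ^- n.+1.
Proof.
rewrite exprS invfM -mulrDl.
have -> : (2:R)^-1 + 2^-1 = 1 by field.
by rewrite mul1r.
Qed.

Lemma geom_le c N : \sum_(0 <= j < N) (2:R) ^- (c + j).+1 <= 2 ^- c - 2 ^- (c + N).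
Proof.
elim: N => [|N IH]; first by rewrite big_geq // addn0 subrr.
rewrite big_nat_recr //=; apply: le_trans (lerD IH (lexx _)) _.
by rewrite [X in _ - X](p2S (c + N)) -addnS opprD addrA subrK.
Qed.

Lemma item (e : nat -> nat) (C : set cantor) (t : nat) :
  {homo e : m n / (m <= n)%N} -> (forall N, exists n, (N <= e n)%N) ->
  exists mp : nat * cantor, (forall x, C x -> forall i, (i < mp.1)%N -> x i = mp.2 i) /\
    (2:R) ^- (e mp.1) <= estar e (diam R C) + 2 ^- t.
Proof.
move=> emon eunb.
have [n tn] := eunb t.
have small : (2:R) ^- (e n) <= estar e (diam R C) + 2 ^- t.
  apply: le_trans (_ : 2 ^- t <= _); first by rewrite p2le.
  by rewrite lerDr estar_ge0.
case: (pselect (exists c, C c)) => [[c Cc]|nC]; last first.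
  exists (n, fun _ => false); split => // x Cx; by exfalso; apply: nC; exists x.
case: (diam_cases R Cc) => [Hall|[m [Hd Hagr]]].
  exists (n, c); split => // x Cx i _; exact: Hall.
exists (m, c); split => //=.
by rewrite Hd estar_p2 lerDl ltW // p2_gt0.
Qed.
End A.



Theorem lemma3p3 (R : realType) (e h : nat -> nat) :
  {homo e : m n / (m <= n)%N} -> (forall N, exists n, (N <= e n)%N) ->
  {homo h : m n / (m <= n)%N} -> (forall N, exists n, (N <= h n)%N) ->
  (forall l n : nat, (l < h (2 ^ n))%N -> (e l <= n)%N) ->
  @Nnull R (@estar R e) `<=` Jset h.
Proof.
move=> emon eunb hmon hunb Hyp A HA.
have Hcov : forall k, exists C : nat -> set cantor, A `<=` \bigcup_n C n /\
    forall N, (\sum_(0 <= j < N) estar e (diam R (C j)) <= (2:R) ^- (k + 5).+1)%R.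
  move=> k; apply: small_cover; [move=> x; exact: estar_ge0 | exact: HA | exact: p2_gt0].
have [C HC] := choice Hcov.
have Hit : forall kj : nat * nat, exists mp : nat * cantor,
    (forall x, C kj.1 kj.2 x -> forall i, (i < mp.1)%N -> x i = mp.2 i) /\
    ((2:R) ^- (e mp.1) <= estar e (diam R (C kj.1 kj.2)) + 2 ^- ((kj.1 + 5).+1 + kj.2).+1)%R.
  by move=> kj; apply: item.
have [MP HMP] := choice Hit.
pose len k j := (MP (k, j)).1.
pose pt k j := (MP (k, j)).2.
pose L k j := e (len k j).
have Hsum : forall k N, (\sum_(0 <= j < N) (2:R) ^- (L k j) <= 2 ^- (k + 5))%R.
  move=> k N.
  apply: le_trans (_ : \sum_(0 <= j < N) (estar e (diam R (C k j)) + 2 ^- ((k + 5).+1 + j).+1) <= _)%R.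
    by apply: ler_sum => j _; exact: (HMP (k, j)).2.
  rewrite big_split /=.
  apply: le_trans (lerD ((HC k).2 N) (geom_le R (k + 5).+1 N)) _.
  by rewrite (p2S R (k + 5)) lerD2l gerDl oppr_le0 ltW // p2_gt0.
have Hrank k j : ((rank (L k) j).+1 * 2 ^ (k + 5) <= 2 ^ (L k j))%N.
  exact: (rank_bound (Hsum k)).
have HLk k j : ((k + 5) <= L k j)%N.
  by rewrite -(leq_exp2l _ _ (ltnSn 1)); apply: leq_trans (Hrank k j); rewrite leq_pmull.
have Hrk k j : (rank (L k) j < 2 ^ (L k j - (k + 5)))%N.
  have E : (2 ^ (L k j) = 2 ^ (L k j - (k + 5)) * 2 ^ (k + 5))%N by rewrite -expnD subnK.
  by have H := Hrank k j; rewrite E leq_pmul2r ?expn_gt0 // in H.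
pose slot k j := (2 ^ k * (2 * (2 ^ (L k j - (k + 5)) + rank (L k) j)).+1)%N.
have slot_inj : forall k j k' j', slot k j = slot k' j' -> k = k' /\ j = j'.
  move=> k j k' j' /odd_part_inj [kk' Hq]; subst k'; split => //.
  have [DD rr] := dyadic_inj (Hrk k j) (Hrk k j') Hq.
  have LL : L k j = L k j'.
    by have := HLk k j; have := HLk k j'; lia.
  case: (ltngtP j j') => // [lt|gt].
    by have := rank_lt lt LL; rewrite rr ltnn.
  by have := rank_lt gt (esym LL); rewrite rr ltnn.
have slot_big k j : (k < slot k j)%N.
  by apply: leq_trans (ltn_expl k (ltnSn 1)) _; rewrite leq_pmulr.
have slot_small k j : (h (slot k j) <= len k j)%N.
  apply: leq_trans (_ : h (2 ^ (L k j).-1) <= _)%N.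
    apply: hmon.
    set D := (L k j - (k + 5))%N.
    have -> : ((L k j).-1 = k + (D + 4))%N by have := HLk k j; rewrite /D; lia.
    rewrite expnD leq_mul2l; apply/orP; right.
    rewrite expnD (_ : 2 ^ 4 = 16)%N //.
    have := Hrk k j; rewrite -/D; lia.
  rewrite leqNgt; apply/negP => /Hyp.
  by have := HLk k j; rewrite /L; lia.
pose sigma n := match pselect (exists kj : nat * nat, slot kj.1 kj.2 = n) with
  | left H => mkseq (pt (proj1_sig (cid H)).1 (proj1_sig (cid H)).2) (h n)
  | right _ => nseq (h n) false end.
exists sigma; split.
  move=> n; rewrite /sigma.
  by destruct (pselect (exists kj : nat * nat, slot kj.1 kj.2 = n)); rewrite ?size_mkseq ?size_nseq.
move=> x Ax m0.
case: ((HC m0).1 x Ax) => j _ Cj.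
exists (slot m0 j); split; first exact: ltnW (slot_big m0 j).
rewrite /sigma.
destruct (pselect (exists kj : nat * nat, slot kj.1 kj.2 = slot m0 j)) as [H|H]; last first.
  by exfalso; apply: H; exists (m0, j).
case: (cid H) => [[k' j'] /= Heq].
have [-> ->] := slot_inj _ _ _ _ Heq.
move=> i; rewrite size_mkseq => hi; rewrite nth_mkseq //.
symmetry; apply: (HMP (m0, j)).1 => //.
exact: leq_trans hi (slot_small m0 j).
Qed.
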